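(* Fix $a$ and $q$ (with $|q|<1$, or formally), and let $(\boldsymbol{\alpha}_n(a))_{n\ge0}$ be a sequence with $\boldsymbol{\alpha}_0(a)=1$ that does not depend on $k$. For each $k$ let $\boldsymbol{\beta}_n(a,k)$ be defined so that $(\boldsymbol{\alpha}_n(a),\boldsymbol{\beta}_n(a,k))$ is a WP-Bailey pair (relative to $a$, with parameter $k$), and set $\boldsymbol{\beta}_{-1}(a,k):=0$. Define $\boldsymbol{\alpha}^*_0(a)=\boldsymbol{\beta}^*_0(a,k)=1$ and, for $n\ge1$, \[ \boldsymbol{\alpha}_n^*(a) = (aq^n+q^{-n})\boldsymbol{\alpha}_n(a), \] \[ \boldsymbol{\beta}_n^*(a,k) = \frac{(1+aq^{2n})\boldsymbol{\beta}_n(a,k)-(1-k)\left(1-\frac{k}{a}\right)\boldsymbol{\beta}_{n-1}(a,kq)}{q^{n}} - a\,\frac{(k,k/a;q)_{n}}{(aq,q;q)_{n}}. \] Then $(\boldsymbol{\alpha}_n^*(a),\boldsymbol{\beta}_n^*(a,k))$ is a WP-Bailey pair (relative to $a$, with parameter $k$).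
   Context: Notation: $(x;q)_n=\prod_{i=0}^{n-1}(1-xq^i)$, $(x_1,\dots,x_j;q)_n=(x_1;q)_n\cdots(x_j;q)_n$, and similarly for $n=\infty$. A pair of sequences $(\boldsymbol{\alpha}_n(a,k,q),\boldsymbol{\beta}_n(a,k,q))_{n\ge0}$ is a WP-Bailey pair (relative to $a$, with parameter $k$) if $\boldsymbol{\alpha}_0=1$ and for all $n\ge0$ \[\boldsymbol{\beta}_n=\sum_{j=0}^n\frac{(k/a;q)_{n-j}(k;q)_{n+j}}{(q;q)_{n-j}(aq;q)_{n+j}}\boldsymbol{\alpha}_j.\] Parameters are assumed generic so that no denominator vanishes. *)

(* Defs.v *)
From HB Require Import structures.
From mathcomp Require Import all_boot all_order all_algebra.
Set Implicit Arguments. Unset Strict Implicit. Unset Printing Implicit Defensive.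
Import Order.TTheory GRing.Theory Num.Theory.
Local Open Scope ring_scope.

Definition qpoch (R : fieldType) (x q : R) (n : nat) : R :=
  \prod_(i < n) (1 - x * q ^+ i).

Definition WPBailey (R : fieldType) (a k q : R) (alpha beta : nat -> R) : Prop :=
  alpha 0%N = 1 /\
  forall n : nat,
    beta n = \sum_(j < n.+1)
      (qpoch (k / a) q (n - j) * qpoch k q (n + j))
      / (qpoch q q (n - j) * qpoch (a * q) q (n + j)) * alpha j.

Definition alphaStar (R : fieldType) (a q : R) (alpha : nat -> R) (n : nat) : R :=
  if n is 0%N then 1 else (a * q ^+ n + q ^- n) * alpha n.

(* beta^*_n(a,k); beta k n stands for beta_n(a,k). *)
Definition betaStar (R : fieldType) (a q : R) (beta : R -> nat -> R) (k : R)
    (n : nat) : R :=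
  if n is m.+1 then
    ((1 + a * q ^+ (2 * n)) * beta k n - (1 - k) * (1 - k / a) * beta (k * q) m)
      / q ^+ n
    - a * (qpoch k q n * qpoch (k / a) q n) / (qpoch (a * q) q n * qpoch q q n)
  else 1.

(* Main.v *)
Require Import Defs.
From HB Require Import structures.
From mathcomp Require Import all_boot all_order all_algebra.
From mathcomp Require Import ring zify.
Import GRing.Theory.
Local Open Scope ring_scope.

Lemma qpochS (R : fieldType) (x q : R) n :
  qpoch x q n.+1 = qpoch x q n * (1 - x * q ^+ n).
Proof. by rewrite /qpoch big_ord_recr. Qed.

Lemma qpochSl (R : fieldType) (x q : R) n :
  qpoch x q n.+1 = (1 - x) * qpoch (x * q) q n.
Proof.
rewrite /qpoch big_ord_recl /= expr0 mulr1; congr (_ * _).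
by apply: eq_bigr => i _; rewrite /bump /= add1n exprS mulrA.
Qed.

Lemma qpoch0 (R : fieldType) (x q : R) : qpoch x q 0 = 1.
Proof. by rewrite /qpoch big_ord0. Qed.

Lemma termA (R : fieldType) (a q k : R) (m j : nat) (hjm : (j <= m)%N)
    (hqq : forall m : nat, qpoch q q m != 0)
    (haq : forall m : nat, qpoch (a * q) q m != 0) (ha : a != 0) :
  (1 - k) * (1 - k / a) *
  (qpoch (k * q / a) q (m - j) * qpoch (k * q) q (m + j)
     / (qpoch q q (m - j) * qpoch (a * q) q (m + j)))
  = qpoch (k / a) q (m.+1 - j) * qpoch k q (m.+1 + j)
     / (qpoch q q (m.+1 - j) * qpoch (a * q) q (m.+1 + j))
    * ((1 - q ^+ (m.+1 - j)) * (1 - a * q ^+ (m.+1 + j))).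
Proof.
rewrite subSn // addSn.
have hC := hqq (m - j)%N; have hD := haq (m + j)%N.
have hC1 := hqq (m - j).+1; have hD1 := haq (m + j).+1.
rewrite qpochS in hC1; rewrite qpochS in hD1.
move: hC1 hD1; rewrite !mulf_eq0 !negb_or => /andP[_ h1] /andP[_ h2].
rewrite (@qpochSl _ (k / a)) (@qpochSl _ k) !qpochS.
have -> : k / a * q = k * q / a by rewrite mulrAC.
rewrite !exprS -!mulrA.
set A := qpoch (k * q / a) q (m - j).
set B := qpoch (k * q) q (m + j).
set C := qpoch q q (m - j).
set D := qpoch (a * q) q (m + j).
move: h1 h2; rewrite -!mulrA => h1 h2.
by field; rewrite ?hC ?hD ?h1 ?h2.
Qed.

Lemma termB (R : fieldType) (a q : R) (n j : nat) (hj : (j <= n)%N) (hq : q != 0) :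
  ((1 + a * q ^+ (2 * n)) - (1 - q ^+ (n - j)) * (1 - a * q ^+ (n + j))) / q ^+ n
  = a * q ^+ j + q ^- j.
Proof.
have -> : n = ((n - j) + j)%N by rewrite subnK.
rewrite addnK; set d := (n - j)%N.
have -> : (2 * (d + j) = d + j + d + j)%N by rewrite mul2n -addnn; lia.
rewrite !exprD.
have hd : q ^+ d != 0 by rewrite expf_neq0.
have hj' : q ^+ j != 0 by rewrite expf_neq0.
by field; rewrite hd hj'.
Qed.

Theorem mainTheorem1 (R : fieldType) (a q : R) (alpha : nat -> R)
    (beta : R -> nat -> R)
    (ha : a != 0) (hq : q != 0)
    (hqq : forall m : nat, qpoch q q m != 0)
    (haq : forall m : nat, qpoch (a * q) q m != 0)
    (hpair : forall k : R, WPBailey a k q alpha (beta k)) :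
  forall k : R, WPBailey a k q (alphaStar a q alpha) (betaStar a q beta k).
Proof.
move=> k; split; first by [].
have [a0 H1] := hpair k; have [_ H2] := hpair (k * q).
case=> [|m].
  by rewrite big_ord1 subn0 addn0 !qpoch0 /= !(mulr1, invr1).
rewrite /betaStar H1 H2.
set c := fun (n j : nat) => qpoch (k / a) q (n - j) * qpoch k q (n + j)
     / (qpoch q q (n - j) * qpoch (a * q) q (n + j)).
have HA : (1 - k) * (1 - k / a) * (\sum_(j < m.+1)
      qpoch (k * q / a) q (m - j) * qpoch (k * q) q (m + j)
      / (qpoch q q (m - j) * qpoch (a * q) q (m + j)) * alpha j)
  = \sum_(j < m.+2) c m.+1 j * ((1 - q ^+ (m.+1 - j)) * (1 - a * q ^+ (m.+1 + j)))
        * alpha j.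
  rewrite [in RHS]big_ord_recr /= subnn expr0 subrr mul0r mulr0 mul0r addr0.
  rewrite mulr_sumr; apply: eq_bigr => j _.
  by rewrite mulrA termA // -ltnS.
rewrite HA.
have HS : \sum_(j < m.+2) c m.+1 j * alpha j = \sum_(j < m.+2) (c m.+1 j * alpha j)
  by [].
rewrite mulr_sumr -sumrB mulr_suml.
transitivity (\sum_(j < m.+2) c m.+1 j * (a * q ^+ j + q ^- j) * alpha j
   - a * c m.+1 0%N).
  congr (_ - _).
    apply: eq_bigr => j _.
    rewrite -(@termB _ a q m.+1 j (ltn_ord j) hq).
    rewrite /c; ring.
  by rewrite /c subn0 addn0 -mulrA (mulrC (qpoch k q _)) (mulrC (qpoch (a * q) q _)).
rewrite big_ord_recl [in RHS]big_ord_recl /= a0.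
rewrite addrAC; congr (_ + _).
  rewrite expr0 invr1 !mulr1 -/(c m.+1 0%N); ring.
by apply: eq_bigr => i _; rewrite /c mulrA.
Qed.
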